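(* Let $\mathcal D$ be a $2$-$(v,k,\lambda)$ design admitting a flag-transitive point-imprimitive automorphism group $G$ preserving a nontrivial partition $\Sigma$ of the point set into $v_1$ classes of size $v_0$, and let $k_0,k_1,\mathcal D_0$ be as in the context. Then $v_0>k_0\ge2$, and one of the following holds: (1) $k_0=2$, $v=(v_0-1)(2k_1-1)+1$, and $G_\Delta^\Delta$ is $2$-transitive on $\Delta$; (2) $3\le k_0\le v_0-2$ and $\mathcal D_0$ is a $2$-design; (3) $3\le k_0=v_0-1$, $\mathcal D_0$ is a $1$-design, and $k=t(v_0-2)+1$, $v=t(v_0-1)+1$ for some integer $t\ge2$.
   Context: By the Camina–Zieschang theorem, in this situation there is a constant $k_0\ge 2$ such that every block meets every class $\Delta\in\Sigma$ in either $0$ or $k_0$ points; $k_0$ divides $k$, $k_1=k/k_0$ is the number of classes met by any block, and $\frac{v-1}{k-1}=\frac{v_0-1}{k_0-1}$. For $\Delta\in\Sigma$, $\mathcal D_0=\mathcal D_\Delta$ is the incidence structure with point set $\Delta$ and blocks the nonempty sets $B\cap\Delta$ ($B$ a block of $\mathcal D$); it is either a symmetric $1$-design with $k_0=v_0-1$ or a $2$-$(v_0,k_0,\lambda_0)$ design, and $G_\Delta^\Delta$ (the permutation group induced on $\Delta$ by its setwise stabilizer $G_\Delta$) acts flag-transitively on it. *)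

(* Defs.v *)
From mathcomp Require Import all_boot all_fingroup all_solvable.
Set Implicit Arguments. Unset Strict Implicit. Unset Printing Implicit Defensive.

Section Designs.
Variable P : finType.

Definition is_2design (X : {set P}) (Bs : {set {set P}}) (k lam : nat) : Prop :=
  [/\ 0 < lam,
      forall B, B \in Bs -> B \subset X /\ #|B| = k &
      forall x y, x \in X -> y \in X -> x != y ->
        #|[set B in Bs | (x \in B) && (y \in B)]| = lam].

Definition is_1design (X : {set P}) (Bs : {set {set P}}) (k r : nat) : Prop :=
  [/\ 0 < r,
      forall B, B \in Bs -> B \subset X /\ #|B| = k &
      forall x, x \in X -> #|[set B in Bs | x \in B]| = r].

Definition preserves_blocks (G : {set {perm P}}) (Bs : {set {set P}}) : Prop :=
  forall g B, g \in G -> B \in Bs -> (fun x => g x) @: B \in Bs.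

Definition flag_transitive (G : {set {perm P}}) (Bs : {set {set P}}) : Prop :=
  forall x B y C, B \in Bs -> x \in B -> C \in Bs -> y \in C ->
    exists2 g, g \in G & g x = y /\ (fun z => g z) @: B = C.

Definition induced_blocks (Bs : {set {set P}}) (Delta : {set P}) : {set {set P}} :=
  [set B :&: Delta | B in Bs & B :&: Delta != set0].

End Designs.

(* Main.v *)
Require Import Defs.
From mathcomp Require Import all_boot all_fingroup all_solvable.
From mathcomp Require Import zify.
Set Implicit Arguments. Unset Strict Implicit. Unset Printing Implicit Defensive.

Lemma card_sum (P : finType) (A C : {set P}) : #|A :&: C| = \sum_(x in C) (x \in A).
Proof.
rewrite -sum1_card big_mkcond [RHS]big_mkcond /=; apply: eq_bigr => x _.
by rewrite inE; case: (x \in A); case: (x \in C).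
Qed.

Lemma dcount (P : finType) (Bs : {set {set P}}) (X : {set P}) x :
  \sum_(y in X :\ x) #|[set B in Bs | (x \in B) && (y \in B)]| =
  \sum_(B in [set B in Bs | x \in B]) #|(B :&: X) :\ x|.
Proof.
transitivity (\sum_(y in X :\ x) \sum_(B in [set B in Bs | x \in B]) (y \in B) : nat).
  apply: eq_bigr => y _; rewrite -sum1_card big_mkcond [RHS]big_mkcond /=.
  apply: eq_bigr => B _; rewrite !inE.
  by case: (B \in Bs); case: (x \in B); case: (y \in B).
rewrite exchange_big /=; apply: eq_bigr => B _.
rewrite -sum1_card big_mkcond [RHS]big_mkcond /=; apply: eq_bigr => y _.
rewrite !inE. by case: (y \in B); case: (y \in X); case: (y == x).
Qed.

Lemma card_part (P : finType) (Sigma : {set {set P}}) (B : {set P}) :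
  partition Sigma [set: P] -> #|B| = \sum_(D in Sigma) #|B :&: D|.
Proof.
move=> part.
rewrite -[B in LHS]setIT card_sum (set_partition_big _ part).
by apply: eq_bigr => D _; rewrite card_sum.
Qed.

Lemma class_fix (P : finType) (G : {group {perm P}}) (Sigma : {set {set P}}) Delta g z :
  partition Sigma [set: P] ->
  (forall g D, g \in G -> D \in Sigma -> (fun x => g x) @: D \in Sigma) ->
  g \in G -> Delta \in Sigma -> z \in Delta -> g z \in Delta ->
  (fun x => g x) @: Delta = Delta.
Proof.
case/and3P=> _ tI _ pres Gg SD zD gzD.
have gD := pres _ _ Gg SD.
have gz : g z \in (fun x => g x) @: Delta by apply: imset_f.
by rewrite -(def_pblock tI gD gz) (def_pblock tI SD gzD).
Qed.

Lemma mult_le (P : finType) (blocks : {set {set P}}) (G : {group {perm P}})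
  (Sigma : {set {set P}}) Delta C C' :
  partition Sigma [set: P] ->
  (forall g D, g \in G -> D \in Sigma -> (fun x => g x) @: D \in Sigma) ->
  preserves_blocks G blocks -> flag_transitive G blocks ->
  Delta \in Sigma ->
  C \in induced_blocks blocks Delta -> C' \in induced_blocks blocks Delta ->
  #|[set B in blocks | B :&: Delta == C]| <= #|[set B in blocks | B :&: Delta == C']|.
Proof.
move=> part pres presB ft SD.
case/imsetP=> B; rewrite inE => /andP[bB /set0Pn[x xC]] ->.
case/imsetP=> B'; rewrite inE => /andP[bB' /set0Pn[x' xC']] ->.
move: (xC) (xC') => /setIP[xB xD] /setIP[xB' xD'].
have [g Gg [gx gB]] := ft x B x' B' bB xB bB' xB'.
have gD : (fun z => g z) @: Delta = Delta.
  by apply: (class_fix part pres Gg SD xD); rewrite gx.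
have ginj : injective (fun A : {set P} => (fun z => g z) @: A).
  by apply: imset_inj; apply: perm_inj.
rewrite -(card_imset _ ginj); apply: subset_leq_card; apply/subsetP=> _ /imsetP[B1 + ->].
rewrite !inE => /andP[bB1 /eqP e1]; rewrite presB //=.
rewrite -{1}gD -imsetI; last by move=> u v _ _; apply: perm_inj.
by rewrite e1 imsetI ?gB ?gD //; move=> u v _ _; apply: perm_inj.
Qed.

Lemma two_trans (P : finType) (blocks : {set {set P}}) (k lam : nat)
  (G : {group {perm P}}) (Sigma : {set {set P}}) Delta :
  is_2design [set: P] blocks k lam ->
  partition Sigma [set: P] ->
  (forall g D, g \in G -> D \in Sigma -> (fun x => g x) @: D \in Sigma) ->
  flag_transitive G blocks ->
  (forall B, B \in blocks -> #|B :&: Delta| \in [:: 0; 2]) ->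
  Delta \in Sigma ->
  forall x0 y0 x y, x0 \in Delta -> y0 \in Delta -> x0 != y0 ->
    x \in Delta -> y \in Delta -> x != y ->
  exists2 g, g \in ('N_G(Delta | 'P))%g & g x0 = x /\ g y0 = y.
Proof.
move=> [lam0 _ Hlam] part pres ft Hk2 SD x0 y0 x y x0D y0D nxy0 xD yD nxy.
have exB u w : u != w -> exists2 B, B \in blocks & (u \in B) && (w \in B).
  move=> nuw; have := Hlam u w (in_setT _) (in_setT _) nuw.
  move=> H; have : 0 < #|[set B in blocks | (u \in B) && (w \in B)]| by rewrite H.
  by case/card_gt0P=> B; rewrite inE => /andP[? ?]; exists B.
have [B bB /andP[x0B y0B]] := exB _ _ nxy0.
have [B' bB' /andP[xB' yB']] := exB _ _ nxy.
have [g Gg [gx gB]] := ft x0 B x B' bB x0B bB' xB'.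
have gD : (fun z => g z) @: Delta = Delta.
  by apply: (class_fix part pres Gg SD x0D); rewrite gx.
exists g.
  rewrite inE Gg /=; apply/astabsP => z /=.
  by rewrite /aperm -[in LHS]gD (mem_imset _ _ (@perm_inj _ g)).
split=> //.
have gyS : g y0 \in B' :&: Delta.
  by rewrite -gB -gD inE !(mem_imset _ _ (@perm_inj _ g)) y0B y0D.
have c2 : #|B' :&: Delta| = 2.
  have := Hk2 _ bB'; rewrite !inE => /orP[/eqP c0|/eqP //].
  by move: c0 => /eqP; rewrite cards_eq0 => /eqP e; move: gyS; rewrite e inE.
apply/eqP; apply: contraT => ne.
have := cardsD1 x (B' :&: Delta); rewrite c2 inE xB' xD.
rewrite (cardsD1 y) !inE yB' yD eq_sym nxy /= => /eqP.
move=> /eqP H.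
have e : (B' :&: Delta) :\ x :\ y = set0 by apply/eqP; rewrite -cards_eq0; move: H; by case: #|_|.
have : g y0 \in (B' :&: Delta) :\ x :\ y.
  rewrite !inE ne /=; move: gyS; rewrite inE => -> ; rewrite andbT -gx.
  by rewrite (inj_eq (@perm_inj _ g)) eq_sym.
by rewrite e inE.
Qed.

Lemma arith1 v v0 k k0 lam r : 0 < lam -> 1 < v0 -> 2 <= k < v ->
  (v-1)*lam = r*(k-1) -> (v0-1)*lam = r*(k0-1) -> 2 <= k0 /\ 0 < r.
Proof. move=> l0 v01 /andP[k2 kv] EA EB; nia. Qed.

Lemma arith2 v v0 k k0 lam r : 0 < lam -> 1 < v0 -> 2 <= k < v ->
  (v-1)*lam = r*(k-1) -> (v0-1)*lam = r*(k0-1) -> k0 <= v0 ->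
  k0 < v0 /\ (v-1)*(k0-1) = (v0-1)*(k-1).
Proof.
move=> l0 v01 /andP[k2 kv] EA EB kv0; split.
  rewrite ltn_neqAle kv0 andbT; apply/eqP => e; rewrite e in EB.
  move/eqP: EB; rewrite mulnC eqn_pmul2r; last lia.
  move/eqP=> rl; subst r; move: EA; rewrite mulnC => /eqP; rewrite eqn_pmul2l // => /eqP; lia.
apply/eqP; rewrite -(eqn_pmul2r l0); apply/eqP.
by rewrite mulnAC EA [RHS]mulnAC EB mulnAC.
Qed.

Lemma arith3 v v0 k : 3 <= v0 - 1 -> 2 <= k -> 2*v0 <= v ->
  (v-1)*(v0-1-1) = (v0-1)*(k-1) ->
  exists2 t, 2<=t & k = t*(v0-2)+1 /\ v = t*(v0-1)+1.
Proof.
move=> h3 k2 vv E.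
have e2 : v0 - 2 = v0 - 1 - 1 by lia.
rewrite e2.
have co : coprime (v0-1-1) (v0-1).
  rewrite [X in coprime _ X](_ : _ = (v0-1-1).+1); [exact: coprimenS | lia].
have dv : (v0-1-1) %| (k-1) by rewrite -(Gauss_dvdr _ co) -E dvdn_mull.
set t := (k-1) %/ (v0-1-1).
have kt : k - 1 = t * (v0-1-1) by rewrite divnK.
have vt : v - 1 = (v0-1) * t.
  apply/eqP; rewrite -(eqn_pmul2r (_ : 0 < v0-1-1)); last lia.
  by rewrite E kt mulnA.
exists t; last by split; lia.
case: t kt vt => [|[|t]] kt vt //; lia.
Qed.

Theorem lemma3p3 (P : finType) (blocks : {set {set P}}) (k lam : nat)
  (G : {group {perm P}}) (Sigma : {set {set P}}) (v0 k0 : nat)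
  (Delta : {set P}) :
  is_2design [set: P] blocks k lam -> 2 <= k < #|P| ->
  preserves_blocks G blocks -> flag_transitive G blocks ->
  partition Sigma [set: P] ->
  (forall D, D \in Sigma -> #|D| = v0) ->
  1 < v0 -> 1 < #|Sigma| ->
  (forall g D, g \in G -> D \in Sigma -> (fun x => g x) @: D \in Sigma) ->
  0 < k0 ->
  (forall B D, B \in blocks -> D \in Sigma -> #|B :&: D| \in [:: 0; k0]) ->
  Delta \in Sigma ->
  let k1 := k %/ k0 in
  let D0 := induced_blocks blocks Delta in
  k0 < v0 /\ 2 <= k0 /\
  [\/ k0 = 2 /\ #|P| = (v0 - 1) * (2 * k1 - 1) + 1 /\
        [transitive^2 'N_G(Delta | 'P), on Delta | 'P],
      (3 <= k0 <= v0 - 2) /\ (exists lam0, is_2design Delta D0 k0 lam0) |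
      (3 <= k0 /\ k0 = v0 - 1) /\ (exists r0, is_1design Delta D0 k0 r0) /\
        (exists2 t, 2 <= t & k = t * (v0 - 2) + 1 /\ #|P| = t * (v0 - 1) + 1)].
Proof.
move=> H2 hk presB ft part Hv0 v01 S1 pres k0gt0 Hk0 SD k1 D0.
have [lamgt0 Hbl Hlam] := H2.
have cD : #|Delta| = v0 := Hv0 _ SD.
have [x xD] : exists x, x \in Delta.
  by apply/card_gt0P; rewrite cD; apply: ltnW.
have k0cap B : B \in blocks -> x \in B -> #|B :&: Delta| = k0.
  move=> bB xB; have := Hk0 _ _ bB SD; rewrite !inE => /orP[/eqP c0|/eqP //].
  move: c0 => /eqP; rewrite cards_eq0 => /eqP e.
  have : x \in B :&: Delta by rewrite inE xB xD.
  by rewrite e inE.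
set r := #|[set B in blocks | x \in B]|.
have EA : (#|P| - 1) * lam = r * (k - 1).
  have := dcount blocks [set: P] x.
  rewrite (eq_bigr (fun _ => lam)); last first.
    by move=> y; rewrite !inE => /andP[nyx _]; apply: Hlam; rewrite ?inE // eq_sym.
  rewrite [X in _ = X](eq_bigr (fun _ => k - 1)); last first.
    move=> B; rewrite inE => /andP[bB xB]; rewrite setIT.
    have := cardsD1 x B; rewrite xB (proj2 (Hbl _ bB)) => ->; by rewrite add1n subn1.
  rewrite !sum_nat_const => <-; congr (_ * _).
  by have := cardsD1 x [set: P]; rewrite in_setT cardsT => ->; rewrite add1n subn1.
have EB : (v0 - 1) * lam = r * (k0 - 1).
  have := dcount blocks Delta x.
  rewrite (eq_bigr (fun _ => lam)); last first.
    by move=> y; rewrite !inE => /andP[nyx _]; apply: Hlam; rewrite ?inE // eq_sym.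
  rewrite [X in _ = X](eq_bigr (fun _ => k0 - 1)); last first.
    move=> B; rewrite inE => /andP[bB xB].
    have := cardsD1 x (B :&: Delta); rewrite inE xB xD k0cap // => ->; by rewrite add1n subn1.
  rewrite !sum_nat_const => <-; congr (_ * _).
  by have := cardsD1 x Delta; rewrite xD cD => ->; rewrite add1n subn1.
have [k02 r0] := arith1 lamgt0 v01 hk EA EB.
have [B0 B0b xB0] : exists2 B, B \in blocks & x \in B.
  by move: r0; rewrite /r => /card_gt0P[B]; rewrite inE => /andP[? ?]; exists B.
have k0v0 : k0 <= v0 by rewrite -(k0cap _ B0b xB0) -cD; apply: subset_leq_card; apply: subsetIr.
have [k0v0' Erel] := arith2 lamgt0 v01 hk EA EB k0v0.
have dvk : k0 %| k.
  rewrite -(proj2 (Hbl _ B0b)) (card_part B0 part); apply: dvdn_sum => D SD'.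
  by have := Hk0 _ _ B0b SD'; rewrite !inE => /orP[/eqP->|/eqP->]; rewrite ?dvdn0 ?dvdnn.
have vv : 2 * v0 <= #|P|.
  rewrite -cardsT (card_partition part) (eq_bigr (fun _ => v0)) ?sum_nat_const; last by move=> D /Hv0.
  by rewrite leq_mul2r S1 orbT.
split=> //; split=> //.
pose m C := #|[set B in blocks | B :&: Delta == C]|.
have C0D0 : B0 :&: Delta \in D0.
  apply/imsetP; exists B0 => //; rewrite inE B0b /=; apply/set0Pn; exists x.
  by rewrite inE xB0 xD.
pose m0 := m (B0 :&: Delta).
have mC C : C \in D0 -> m C = m0.
  by move=> CD; apply/eqP; rewrite eqn_leq !(mult_le part pres presB ft SD).
have m0pos : 0 < m0 by apply/card_gt0P; exists B0; rewrite inE B0b eqxx.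
have D0bl C : C \in D0 -> C \subset Delta /\ #|C| = k0.
  case/imsetP => B; rewrite inE => /andP[bB ne] ->; split; first exact: subsetIr.
  have := Hk0 _ _ bB SD; rewrite !inE => /orP[/eqP c0|/eqP //].
  by move: ne; rewrite -cards_eq0 c0.
have lamS x1 y1 : x1 \in Delta -> y1 \in Delta -> x1 != y1 ->
    lam = #|[set C in D0 | (x1 \in C) && (y1 \in C)]| * m0.
  move=> x1D y1D n1.
  rewrite -(Hlam x1 y1) ?in_setT // -sum1_card.
  rewrite (eq_bigl (fun B => (B \in blocks) && ((x1 \in B) && (y1 \in B)))); last first.
    by move=> B; rewrite inE.
  rewrite (partition_big (fun B => B :&: Delta) (fun C => C \in [set C in D0 | (x1 \in C) && (y1 \in C)])) /=; last first.
    move=> B /andP[bB /andP[x1B y1B]]; rewrite inE; apply/andP; split.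
      apply/imsetP; exists B => //; rewrite inE bB /=; apply/set0Pn; exists x1.
      by rewrite inE x1B x1D.
    by rewrite !inE x1B y1B x1D y1D.
  rewrite -sum_nat_const; apply: eq_bigr => C; rewrite inE => /andP[CD0 /andP[x1C y1C]].
  rewrite -(mC C CD0) /m -sum1_card; apply: eq_bigl => B; rewrite inE.
  case: (B :&: Delta =P C) => [e|_]; last by rewrite !andbF.
  by move: x1C y1C; rewrite -e !inE => /andP[-> _] /andP[-> _]; rewrite !andbT.
have [y yD nxy] : exists2 y, y \in Delta & x != y.
  have : 0 < #|Delta :\ x|.
    by have := cardsD1 x Delta; rewrite xD cD => E; move: v01; rewrite E.
  by case/card_gt0P=> y; rewrite !inE => /andP[nyx yD]; exists y; rewrite // eq_sym.
have D0des : is_2design Delta D0 k0 (lam %/ m0).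
  split => //.
    have := lamS x y xD yD nxy; move=> E; rewrite E mulnK //.
    by move: lamgt0; rewrite E; case: #|_|.
  by move=> x1 y1 x1D y1D n; rewrite (lamS x1 y1 x1D y1D n) mulnK.
have [e2|k03] : k0 = 2 \/ 3 <= k0 by lia.
  constructor 1; split => //; split.
    have kk : 2 * k1 - 1 = k - 1 by rewrite /k1 -[in RHS](divnK dvk) e2 mulnC.
    have vpos : 0 < #|P| by case/andP: hk => _; apply: leq_ltn_trans.
    by rewrite kk -Erel e2 muln1 subnK.
  have Hk2 B : B \in blocks -> #|B :&: Delta| \in [:: 0; 2] by rewrite -e2; move=> bB; apply: Hk0.
  apply/imsetP; exists [tuple x; y].
    rewrite inE /= !inE andbT nxy /=; apply/subsetP => z.
    by rewrite !inE => /orP[]/eqP->.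
  apply/setP => t; apply/idP/idP.
    move=> /dtuple_onP[tinj tD]; apply/imsetP.
    have n01 : tnth t ord0 != tnth t (lift ord0 ord0).
      by apply/eqP => /tinj.
    have [g Ng [gx gy]] := two_trans H2 part pres ft Hk2 SD xD yD nxy (tD ord0) (tD (lift ord0 ord0)) n01.
    exists g => //; apply: eq_from_tnth => i.
    rewrite /= tnth_map /aperm.
    case: i => [[|[|//]]] h.
      rewrite (_ : tnth [tuple x; y] (Ordinal h) = x) //= apermE gx.
      by congr tnth; apply: val_inj.
    rewrite (_ : tnth [tuple x; y] (Ordinal h) = y) //= apermE gy.
    by congr tnth; apply: val_inj.
  case/imsetP => a /setIP[_ Na] ->; apply: n_act_dtuple => //.
  rewrite inE /= !inE andbT nxy /=; apply/subsetP => z.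
  by rewrite !inE => /orP[]/eqP->.
have [e1|ne1] : k0 = v0 - 1 \/ k0 <= v0 - 2 by lia.
  constructor 3; split; [by split | split].
    have R1 x1 : x1 \in Delta ->
        #|[set C in D0 | x1 \in C]| * (k0-1) = (v0-1) * (lam %/ m0).
      move=> x1D; have := dcount D0 Delta x1.
      rewrite (eq_bigr (fun _ => lam %/ m0)); last first.
        move=> y1; rewrite !inE => /andP[ny y1D].
        by case: D0des => _ _ H; apply: H; rewrite // eq_sym.
      rewrite [X in _ = X](eq_bigr (fun _ => k0 - 1)); last first.
        move=> C; rewrite inE => /andP[CD x1C]; have [sC cC] := D0bl C CD.
        rewrite (setIidPl sC); have := cardsD1 x1 C; rewrite x1C cC => ->.
        by rewrite add1n subn1.
      rewrite !sum_nat_const => <-; congr (_ * _).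
      by have := cardsD1 x1 Delta; rewrite x1D cD => ->; rewrite add1n subn1.
    exists #|[set C in D0 | x \in C]|; split.
    - by apply/card_gt0P; exists (B0 :&: Delta); rewrite inE C0D0 inE xB0 xD.
    - exact: D0bl.
    - move=> x1 x1D; apply/eqP; rewrite -(eqn_pmul2r (_ : 0 < k0 - 1)); last lia.
      by rewrite R1 // R1.
  have h3 : 3 <= v0 - 1 by rewrite -e1.
  have k2 : 2 <= k by case/andP: hk.
  rewrite e1 in Erel.
  exact: arith3 h3 k2 vv Erel.
by constructor 2; split => //; [apply/andP; split | exists (lam %/ m0)].
Qed.
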